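(* For every $0\le k\le n$ and every $\lambda\vdash n$, $$m(\lambda,\beta_{H_n^k})=\sum_{C\in\hat S_n}\chi_\lambda(C)\,(n-|\mathrm{supp}(C)|)_k .$$
   Context: Permutations are composed as functions, and $\pi\in S_n$ is identified with the permutation matrix whose $(i,j)$ entry is $1$ iff $i=\pi(j)$. For $A\in GL_n(\mathbb{Z}_2)$ let $\eta(A)$ (resp. $\theta(A)$) be the partition obtained by sorting the row sums (resp. column sums) of $A$, computed as integers, in weakly decreasing order. For $0\le k\le n$, $H_n^k=\{A\in GL_n(\mathbb{Z}_2)\mid \eta(A)=(n,n-1,\dots,n-k+1,1^{n-k}),\ \theta(A)=((k+1)^{n-k},k,k-1,\dots,1)\}$. $\beta_{H_n^k}$ is the complex permutation representation of $S_n$ on the space with basis $H_n^k$ given by $\pi\circ A=\pi A\pi^{-1}$. $\hat S_n$ is the set of conjugacy classes of $S_n$; $\chi_\lambda$ is the irreducible character indexed by $\lambda$ and $m(\lambda,\beta)$ the multiplicity of this irreducible in $\beta$; $\mathrm{supp}(C)$ is the set of points moved by an element of $C$ (its size depends only on $C$); $(m)_k=m(m-1)\cdots(m-k+1)$ is the falling factorial. *)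

(* Defs.v *)
From mathcomp Require Import all_boot all_algebra all_fingroup all_field all_character.

Set Implicit Arguments.
Unset Strict Implicit.
Unset Printing Implicit Defensive.

Import GRing.Theory Num.Theory.

Definition rowsum (n : nat) (A : 'M['Z_2]_n) (i : 'I_n) : nat :=
  \sum_(j < n) val (A i j).
Definition colsum (n : nat) (A : 'M['Z_2]_n) (j : 'I_n) : nat :=
  \sum_(i < n) val (A i j).

Definition eta (n : nat) (A : 'M['Z_2]_n) : seq nat :=
  sort geq [seq rowsum A i | i <- enum 'I_n].
Definition theta (n : nat) (A : 'M['Z_2]_n) : seq nat :=
  sort geq [seq colsum A j | j <- enum 'I_n].

Definition eta_target (n k : nat) : seq nat :=
  [seq n - i | i <- iota 0 k] ++ nseq (n - k) 1%N.
Definition theta_target (n k : nat) : seq nat :=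
  nseq (n - k) k.+1 ++ [seq k - i | i <- iota 0 k].

Definition Hnk (n k : nat) : {set 'M['Z_2]_n} :=
  [set A | [&& A \in unitmx, eta A == eta_target n k & theta A == theta_target n k]].

(* pi A pi^-1, where pi is identified with the matrix whose (i,j) entry is
   1 iff i = pi(j):  (pi A pi^-1) i j = A (pi^-1 i) (pi^-1 j). *)
Definition pconj (n : nat) (s : 'S_n) (A : 'M['Z_2]_n) : 'M['Z_2]_n :=
  \matrix_(i, j) A (s^-1%g i) (s^-1%g j).

Lemma pconj1 (n : nat) (A : 'M['Z_2]_n) : pconj 1%g A = A.
Proof. by apply/matrixP => i j; rewrite mxE invg1 !perm1. Qed.

Lemma pconjM (n : nat) (x y : 'S_n) (A : 'M['Z_2]_n) :
  pconj (x * y)%g A = pconj y (pconj x A).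
Proof. by apply/matrixP => i j; rewrite !mxE invMg !permM. Qed.

Lemma geq_sort_perm (n : nat) (f : 'I_n -> nat) (s : 'S_n) :
  sort geq [seq f (s i) | i <- enum 'I_n] = sort geq [seq f i | i <- enum 'I_n].
Proof.
apply/perm_sortP.
- by move=> a b; rewrite /= leq_total.
- by move=> a b c /= hba hac; apply: leq_trans hac hba.
- by move=> a b /= /andP [h1 h2]; apply/eqP; rewrite eqn_leq h1 h2.
have -> : [seq f (s i) | i <- enum 'I_n] = [seq f i | i <- [seq s i | i <- enum 'I_n]].
  by elim: (enum _) => //= a l ->.
apply: perm_map; apply: uniq_perm.
- by rewrite map_inj_uniq ?enum_uniq //; apply: perm_inj.
- exact: enum_uniq.
move=> i; rewrite mem_enum inE; apply/mapP; exists (s^-1%g i).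
  by rewrite mem_enum.
by rewrite permKV.
Qed.

Lemma pconj_Hnk (n k : nat) (s : 'S_n) (A : 'M['Z_2]_n) :
  A \in Hnk n k -> pconj s A \in Hnk n k.
Proof.
rewrite !inE => /and3P [uA eA tA]; apply/and3P; split.
- have -> : pconj s A = row_perm s^-1%g (col_perm s^-1%g A).
    by apply/matrixP => i j; rewrite !mxE.
  by rewrite row_permE col_permE !unitmx_mul !unitmx_perm uA.
- rewrite -(eqP eA) /eta.
  have -> : [seq rowsum (pconj s A) i | i <- enum 'I_n]
          = [seq rowsum A (s^-1%g i) | i <- enum 'I_n].
    apply: eq_map => i; rewrite /rowsum.
    rewrite (reindex_inj (@perm_inj _ s)) /=.
    by apply: eq_bigr => j _; rewrite mxE permK.
  by rewrite (geq_sort_perm (rowsum A)).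
- rewrite -(eqP tA) /theta.
  have -> : [seq colsum (pconj s A) i | i <- enum 'I_n]
          = [seq colsum A (s^-1%g i) | i <- enum 'I_n].
    apply: eq_map => j; rewrite /colsum.
    rewrite (reindex_inj (@perm_inj _ s)) /=.
    by apply: eq_bigr => i _; rewrite mxE permK.
  by rewrite (geq_sort_perm (colsum A)).
Qed.

(* The matrices of the permutation representation beta_{H_n^k}: the basis is
   H_n^k (enumerated by enum_val), and pi sends the basis vector A to pi A pi^-1.
   (MathComp representations act on row vectors, on the right; the product of
   'S_n is (x * y) = y o x, so A |-> pconj s A is a right action.) *)
Definition betaH_mx (n k : nat) (s : 'S_n) : 'M[algC]_#|Hnk n k| :=
  \matrix_(i, j) ((pconj s (enum_val i) == enum_val j)%:R)%R.

Lemma betaH_mx_repr (n k : nat) : mx_repr [set: 'S_n] (@betaH_mx n k).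
Proof.
split.
  apply/matrixP => i j; rewrite !mxE pconj1.
  by rewrite (inj_eq enum_val_inj).
move=> x y _ _; apply/matrixP => i j; rewrite !mxE.
have Hx : pconj x (enum_val i) \in Hnk n k by apply/pconj_Hnk/enum_valP.
rewrite (bigD1 (enum_rank_in Hx (pconj x (enum_val i)))) //= !mxE.
rewrite enum_rankK_in // eqxx mul1r pconjM big1 ?addr0 // => l hl.
rewrite !mxE; case: eqP => [e|]; last by rewrite mul0r.
case/eqP: hl; apply: enum_val_inj; by rewrite enum_rankK_in // e.
Qed.

Definition betaH (n k : nat) : mx_representation algC [set: 'S_n] #|Hnk n k| :=
  MxRepresentation (@betaH_mx_repr n k).

Definition supp_size (n : nat) (C : {set 'S_n}) : nat :=
  #|[set x : 'I_n | repr C x != x]|.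

(* Main.v *)
Require Import Defs.
From mathcomp Require Import all_boot all_algebra all_fingroup all_field all_character.
From mathcomp Require Import ring zify.
Set Implicit Arguments. Unset Strict Implicit. Unset Printing Implicit Defensive.
Import GRing.Theory Num.Theory.

Definition rho n k (r : {ffun 'I_k -> 'I_n}) (x : 'I_n) : nat :=
  if [pick t | r t == x] is Some t then val t else k.

Lemma rho_le n k (r : {ffun 'I_k -> 'I_n}) x : rho r x <= k.
Proof. rewrite /rho; case: pickP => [t _|_ //]. exact: (ltnW (ltn_ord t)). Qed.

Lemma rho_spec n k (r : {ffun 'I_k -> 'I_n}) x :
  rho r x < k -> exists t, r t = x /\ val t = rho r x.
Proof.
rewrite /rho; case: pickP => [t /eqP e _|_]; [by exists t | by rewrite ltnn].
Qed.

Lemma rho_lt n k (r : {ffun 'I_k -> 'I_n}) x (h : rho r x < k) : r (Ordinal h) = x.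
Proof.
have [t [e1 e2]] := rho_spec h; rewrite -[RHS]e1; congr (r _); apply: val_inj.
by rewrite /= e2.
Qed.

Lemma rho_ge n k (r : {ffun 'I_k -> 'I_n}) x : k <= rho r x -> forall t, r t != x.
Proof.
rewrite /rho; case: pickP => [t _|H _ t]; first by rewrite leqNgt ltn_ord.
by rewrite H.
Qed.

Lemma rho_r n k (r : {ffun 'I_k -> 'I_n}) (ri : injective r) t : rho r (r t) = t.
Proof.
rewrite /rho; case: pickP => [u /eqP /ri -> //|H].
by have := H t; rewrite eqxx.
Qed.

Lemma rho_ltP n k (r : {ffun 'I_k -> 'I_n}) (ri : injective r) x :
  reflect (exists t, x = r t) (rho r x < k).
Proof.
apply: (iffP idP) => [h|[t ->]]; first by exists (Ordinal h); rewrite rho_lt.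
by rewrite rho_r.
Qed.

Lemma card_ltI k m : m <= k -> #|[set t : 'I_k | t < m]| = m.
Proof.
move=> hm; have wi : injective (widen_ord hm).
  by move=> a b e; apply: val_inj; exact: (congr1 val e).
rewrite -[RHS]card_ord -(card_imset _ wi).
apply: eq_card => t; rewrite !inE; apply/idP/imsetP => [h|[u _ ->]] //=.
by exists (Ordinal h) => //; apply: val_inj.
Qed.

Lemma card_rho_lt n k (r : {ffun 'I_k -> 'I_n}) (ri : injective r) m :
  m <= k -> #|[set x | rho r x < m]| = m.
Proof.
move=> hm; rewrite -{2}(card_ltI hm) -(card_imset _ ri).
apply: eq_card => x; rewrite !inE; apply/idP/imsetP => [h|[t]].
  have hk : rho r x < k by apply: leq_trans h hm.
  by exists (Ordinal hk); rewrite ?inE ?rho_lt.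
by rewrite inE => h ->; rewrite rho_r.
Qed.

Lemma card_rho_ge n k (r : {ffun 'I_k -> 'I_n}) (ri : injective r) :
  #|[set x | k <= rho r x]| = n - k.
Proof.
have h := cardsC [set x | rho r x < k]; rewrite card_ord card_rho_lt // in h.
have e : #|[set x | k <= rho r x]| = #|~: [set x | rho r x < k]|.
  by apply: eq_card => x; rewrite !inE -leqNgt.
rewrite e; lia.
Qed.

Lemma sum_bool (T : finType) (P : pred T) : \sum_(y : T) (P y : nat) = #|[set y | P y]|.
Proof.
by rewrite -sum1dep_card [RHS]big_mkcond; apply: eq_bigr => y _; case: (P y).
Qed.

Definition Bm n k (r : {ffun 'I_k -> 'I_n}) (x y : 'I_n) : bool :=
  if rho r x < k then (k <= rho r y) || (rho r x + rho r y < k) else x == y.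

Lemma rowsumB n k (hk : k <= n) (r : {ffun 'I_k -> 'I_n}) (ri : injective r) x :
  \sum_y (Bm r x y : nat) = if rho r x < k then n - rho r x else 1.
Proof.
rewrite sum_bool /Bm; case: ifP => hx.
  rewrite (_ : [set y | _] = [set y | k <= rho r y] :|: [set y | rho r y < k - rho r x]).
    rewrite cardsU card_rho_ge // card_rho_lt ?leq_subr //.
    rewrite (_ : _ :&: _ = set0) ?cards0 ?subn0.
      have := rho_le r x; move: hk; lia.
    apply/setP => y; rewrite !inE; apply/negbTE; lia.
  by apply/setP => y; rewrite !inE; congr (_ || _); lia.
by rewrite (_ : [set y | _] = [set x]) ?cards1 //; apply/setP => y; rewrite !inE eq_sym.
Qed.

Lemma colsumB n k (r : {ffun 'I_k -> 'I_n}) (ri : injective r) y :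
  \sum_x (Bm r x y : nat) = if rho r y < k then k - rho r y else k.+1.
Proof.
rewrite sum_bool /Bm; case: ifP => hy.
  rewrite -(card_rho_lt ri (leq_subr (rho r y) k)); apply: eq_card => x; rewrite !inE.
  case: ifP => hx; first by apply/idP/idP; lia.
  apply/idP/idP; last by lia.
  by move/eqP => e; rewrite e hy in hx.
rewrite (_ : [set x | _] = y |: [set x | rho r x < k]).
  rewrite cardsU1 card_rho_lt // inE hy //.
apply/setP => x; rewrite !inE; case: ifP => hx.
  by rewrite orbT; apply/orP; left; lia.
by rewrite orbF.
Qed.


Lemma geq_trans : transitive geq.
Proof. by move=> a b c /= hba hac; apply: leq_trans hac hba. Qed.

Lemma sort_target (l t : seq nat) : perm_eq l t -> sorted geq t -> sort geq l = t.
Proof.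
move=> pl st; rewrite -[RHS](sorted_sort geq_trans st).
apply/perm_sortP => //.
- by move=> a b; rewrite /= leq_total.
- exact: geq_trans.
- by move=> a b /= /andP [h1 h2]; apply/eqP; rewrite eqn_leq h1 h2.
Qed.

Lemma nseq_sorted m c : sorted geq (nseq m c).
Proof. by elim: m => // -[|m] //= ->; rewrite leqnn. Qed.

Lemma map_iota_sorted m (f : nat -> nat) :
  (forall x y, x <= y -> f y <= f x) -> sorted geq (map f (iota 0 m)).
Proof. by move=> hf; apply: (homo_sorted (e := leq)) => //; apply: iota_sorted. Qed.

Lemma eta_sorted n k : k <= n -> sorted geq (eta_target n k).
Proof.
move=> hk; rewrite /eta_target sorted_pairwise; last exact: geq_trans.
rewrite pairwise_cat -!sorted_pairwise; try exact: geq_trans.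
rewrite nseq_sorted map_iota_sorted ?andbT; last by move=> x y h; apply: leq_sub2l.
apply/allrelP => x y /mapP [i]; rewrite mem_iota => hi -> /nseqP [-> _] /=.
lia.
Qed.

Lemma theta_sorted n k : sorted geq (theta_target n k).
Proof.
rewrite /theta_target sorted_pairwise; last exact: geq_trans.
rewrite pairwise_cat -!sorted_pairwise; try exact: geq_trans.
rewrite nseq_sorted map_iota_sorted ?andbT; last by move=> x y h; apply: leq_sub2l.
apply/allrelP => x y /nseqP [-> _] /mapP [i]; rewrite mem_iota => hi -> /=.
lia.
Qed.


Lemma perm_split n k (r : {ffun 'I_k -> 'I_n}) (ri : injective r) (f : 'I_n -> nat) :
  perm_eq [seq f x | x <- enum 'I_n]
    ([seq f (r t) | t <- enum 'I_k] ++ [seq f x | x <- enum [set x | k <= rho r x]]).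
Proof.
rewrite (_ : [seq f (r t) | t <- enum 'I_k] = map f (map r (enum 'I_k))); last first.
  by rewrite -map_comp.
rewrite -map_cat; apply: perm_map; apply: uniq_perm.
- exact: enum_uniq.
- rewrite cat_uniq map_inj_uniq ?enum_uniq //= andbT; apply/hasPn => x.
  rewrite mem_enum inE => hx; apply/mapP => -[t _ e].
  by have := rho_ge hx t; rewrite e eqxx.
move=> x; rewrite mem_enum mem_cat mem_enum inE; symmetry.
apply/orP; case: (ltnP (rho r x) k) => h; last by right; rewrite inE.
left; apply/mapP; exists (Ordinal h); by rewrite ?mem_enum ?rho_lt.
Qed.

Lemma map_cst (T U : Type) (c : U) (l : seq T) : [seq c | _ <- l] = nseq (size l) c.
Proof. by elim: l => //= a l ->. Qed.

Lemma valZ2 (b : bool) : val ((b : nat)%:R : 'Z_2)%R = b.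
Proof. by case: b. Qed.

Definition Bmx n k (r : {ffun 'I_k -> 'I_n}) : 'M['Z_2]_n :=
  \matrix_(x, y) ((Bm r x y : nat)%:R)%R.
Definition Phi n k (s : 'S_n) (r : {ffun 'I_k -> 'I_n}) : 'M['Z_2]_n :=
  \matrix_(x, j) ((Bm r x (s^-1 j)%g : nat)%:R)%R.

Lemma rowsumPhi n k (s : 'S_n) (r : {ffun 'I_k -> 'I_n}) x :
  rowsum (Phi s r) x = \sum_y (Bm r x y : nat).
Proof.
rewrite /rowsum (reindex_inj (@perm_inj _ s)) /=.
by apply: eq_bigr => j _; rewrite mxE permK valZ2.
Qed.

Lemma colsumPhi n k (s : 'S_n) (r : {ffun 'I_k -> 'I_n}) j :
  colsum (Phi s r) j = \sum_x (Bm r x (s^-1 j)%g : nat).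
Proof. by rewrite /colsum; apply: eq_bigr => x _; rewrite mxE valZ2. Qed.

Lemma eta_Phi n k (hk : k <= n) (s : 'S_n) (r : {ffun 'I_k -> 'I_n}) (ri : injective r) :
  eta (Phi s r) = eta_target n k.
Proof.
rewrite /eta; apply: sort_target; last exact: eta_sorted.
rewrite (eq_map (rowsumPhi s r)).
apply: perm_trans (perm_split ri _) _.
rewrite (_ : _ ++ _ = eta_target n k) //; rewrite /eta_target; congr (_ ++ _).
  rewrite -val_enum_ord -map_comp; apply: eq_map => t /=.
  by rewrite rowsumB // rho_r // ltn_ord.
have -> : [seq \sum_y (Bm r x y : nat) | x <- enum [set x | k <= rho r x]] =
   [seq 1 | _ <- enum [set x | k <= rho r x]].
  by apply/eq_in_map => x; rewrite mem_enum inE => h; rewrite rowsumB // ltnNge h.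
by rewrite map_cst -cardE card_rho_ge.
Qed.

Lemma theta_Phi n k (hk : k <= n) (s : 'S_n) (r : {ffun 'I_k -> 'I_n}) (ri : injective r) :
  theta (Phi s r) = theta_target n k.
Proof.
rewrite /theta (eq_map (colsumPhi s r)).
rewrite (geq_sort_perm (fun y => \sum_x (Bm r x y : nat)) s^-1).
apply: sort_target; last exact: theta_sorted.
apply: perm_trans (perm_split ri _) _; rewrite perm_catC.
rewrite (_ : _ ++ _ = theta_target n k) //; rewrite /theta_target; congr (_ ++ _).
  have -> : [seq \sum_x (Bm r x y : nat) | y <- enum [set x | k <= rho r x]] =
     [seq k.+1 | _ <- enum [set x | k <= rho r x]].
    by apply/eq_in_map => x; rewrite mem_enum inE => h; rewrite colsumB // ltnNge h.
  by rewrite map_cst -cardE card_rho_ge.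
rewrite -val_enum_ord -map_comp; apply: eq_map => t /=.
by rewrite colsumB // rho_r // ltn_ord.
Qed.


Lemma rho_act n k (g : 'S_n) (r : {ffun 'I_k -> 'I_n}) x :
  rho [ffun t => g (r t)] x = rho r (g^-1 x)%g.
Proof.
rewrite /rho (@eq_pick _ _ (fun t => r t == (g^-1)%g x)) // => t.
rewrite ffunE; apply/eqP/eqP => [<-|->]; by rewrite ?permK ?permKV.
Qed.

Lemma Bm_act n k (g : 'S_n) (r : {ffun 'I_k -> 'I_n}) x y :
  Bm [ffun t => g (r t)] x (g y) = Bm r (g^-1 x)%g y.
Proof.
rewrite /Bm !rho_act permK; case: ifP => // _.
by apply/eqP/eqP => [->|<-]; rewrite ?permK ?permKV.
Qed.

Lemma Phi_act n k (g s : 'S_n) (r : {ffun 'I_k -> 'I_n}) :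
  pconj g (Phi s r) = Phi (s ^ g)%g [ffun t => g (r t)].
Proof.
apply/matrixP => i j; rewrite !mxE.
have -> : ((s ^ g)^-1)%g j = g (s^-1 (g^-1 j))%g.
  by rewrite -conjVg conjgE !permM.
by rewrite Bm_act.
Qed.

Lemma Bm_r n k (r : {ffun 'I_k -> 'I_n}) (ri : injective r) x (t : 'I_k) :
  Bm r x (r t) = (rho r x < k - t).
Proof.
rewrite /Bm rho_r // (leqNgt k t) ltn_ord /=; case: ifP => hx.
  by apply/idP/idP; lia.
apply/eqP/idP => [e|]; last by lia.
by move: hx; rewrite e rho_r // ltn_ord.
Qed.

Lemma Bm_nd n k (r : {ffun 'I_k -> 'I_n}) x y :
  k <= rho r y -> Bm r x y = (rho r x < k) || (x == y).
Proof. by rewrite /Bm => hy; case: ifP => //= _; rewrite hy. Qed.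

Local Open Scope ring_scope.

Lemma Bmx_ker n k (r : {ffun 'I_k -> 'I_n}) (ri : injective r) (u : 'rV['Z_2]_n) :
  u *m Bmx r = 0 -> u = 0.
Proof.
move=> hu.
have col y : \sum_x u 0 x * ((Bm r x y : nat)%:R) = 0.
  transitivity ((u *m Bmx r) 0 y); last by rewrite hu mxE.
  by rewrite mxE; apply: eq_bigr => x _; rewrite mxE.
pose S m := \sum_(x | (rho r x < m)%N) u 0 x.
have S0 : S 0%N = 0 by rewrite /S big_pred0.
have Sk (t : 'I_k) : S (k - t)%N = 0.
  rewrite -(col (r t)) /S [RHS](bigID (fun x => (rho r x < k - t)%N)) /=.
  rewrite [X in _ = _ + X]big1 ?addr0; last by move=> x hx; rewrite Bm_r // (negbTE hx) mulr0.
  by apply: eq_bigr => x hx; rewrite Bm_r // hx mulr1.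
have SS (t : 'I_k) : S t.+1 = u 0 (r t) + S t.
  rewrite /S (bigD1 (r t)) /=; last by rewrite rho_r.
  congr (_ + _); apply: eq_bigl => x; apply/idP/idP.
    case/andP => h1 h2; rewrite ltnS leq_eqVlt in h1; case/orP: h1 => // /eqP e.
    have h : (rho r x < k)%N by rewrite e ltn_ord.
    by move: h2; rewrite -(rho_lt h); apply: contraNT => _; apply/eqP; congr (r _); apply: val_inj.
  move=> h; rewrite ltnW //=; apply: contraTN h => /eqP ->; by rewrite rho_r // ltnn.
have ud (t : 'I_k) : u 0 (r t) = 0.
  have h1 : S t.+1 = 0.
    have hlt : (k - t.+1 < k)%N by have := ltn_ord t; lia.
    have := Sk (Ordinal hlt); rewrite /= (_ : (k - (k - t.+1))%N = t.+1) //.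
    by have := ltn_ord t; lia.
  have h2 : S t = 0.
    case: (posnP t) => [->|tp]; first exact: S0.
    have hlt : (k - t < k)%N by have := ltn_ord t; lia.
    have := Sk (Ordinal hlt); rewrite /= (_ : (k - (k - t))%N = t) //.
    by have := ltn_ord t; lia.
  by have := SS t; rewrite h1 h2 addr0 => <-.
have ud' x : (rho r x < k)%N -> u 0 x = 0 by move=> h; rewrite -(rho_lt h) ud.
apply/rowP => y; rewrite mxE; case: (ltnP (rho r y) k) => hy; first exact: ud'.
rewrite -(col y) (bigD1 y) //= Bm_nd // eqxx orbT mulr1 big1 ?addr0 // => x hx.
rewrite Bm_nd // (negbTE hx) orbF; case: ltnP => h; last by rewrite mulr0.
by rewrite ud' // mul0r.
Qed.

Local Open Scope ring_scope.

Lemma Bmx_unit n k (r : {ffun 'I_k -> 'I_n}) (ri : injective r) : Bmx r \in unitmx.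
Proof.
pose f := fun u : 'rV['Z_2]_n => u *m Bmx r.
have fi : injective f.
  move=> u v e; apply/eqP; rewrite -subr_eq0; apply/eqP; apply: (Bmx_ker ri).
  by rewrite mulmxBl; apply/eqP; rewrite subr_eq0; apply/eqP.
have [g fg gf] := injF_bij fi.
pose C := \matrix_i (g (delta_mx 0 i)) : 'M['Z_2]_n.
suff : C *m Bmx r = 1%:M by case/mulmx1_unit.
apply/row_matrixP => i; rewrite row_mul rowK row1.
exact: (gf (delta_mx 0 i)).
Qed.

Lemma Phi_colperm n k (s : 'S_n) (r : {ffun 'I_k -> 'I_n}) :
  Phi s r = col_perm (s^-1)%g (Bmx r).
Proof. by apply/matrixP => i j; rewrite !mxE. Qed.

Lemma Phi_unit n k (s : 'S_n) (r : {ffun 'I_k -> 'I_n}) (ri : injective r) :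
  Phi s r \in unitmx.
Proof. by rewrite Phi_colperm col_permE unitmx_mul unitmx_perm Bmx_unit. Qed.

Lemma Phi_Hnk n k (hk : (k <= n)%N) (s : 'S_n) (r : {ffun 'I_k -> 'I_n}) (ri : injective r) :
  Phi s r \in Hnk n k.
Proof. by rewrite inE Phi_unit // eta_Phi // theta_Phi // !eqxx. Qed.

Lemma Bmx_cols n k (r : {ffun 'I_k -> 'I_n}) (ri : injective r) y y' :
  (forall x, Bm r x y = Bm r x y') -> y = y'.
Proof.
move=> h; apply/eqP; apply/negPn/negP => ne.
have := Bmx_unit ri; rewrite unitmxE -det_tr (determinant_alternate ne) ?unitr0 //.
by move=> x; rewrite !mxE h.
Qed.

Lemma Z2b_inj (b c : bool) : ((b : nat)%:R : 'Z_2) = (c : nat)%:R -> b = c.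
Proof. by case: b; case: c. Qed.

Lemma rowsum_Phi n k (hk : (k <= n)%N) (s : 'S_n) (r : {ffun 'I_k -> 'I_n}) (ri : injective r) x :
  rowsum (Phi s r) x = if (rho r x < k)%N then (n - rho r x)%N else 1%N.
Proof. by rewrite rowsumPhi rowsumB. Qed.

Lemma Phi_inj n k (hk : (k <= n)%N) (s s' : 'S_n) (r r' : {ffun 'I_k -> 'I_n})
  (ri : injective r) (ri' : injective r') : Phi s r = Phi s' r' -> s = s' /\ r = r'.
Proof.
move=> e.
have erho x : rho r x = rho r' x.
  have := congr1 (fun A => rowsum A x) e; rewrite /= !rowsum_Phi //.
  have l1 := rho_le r x; have l2 := rho_le r' x.
  case: ltnP => h1; case: ltnP => h2; try lia.
    move=> e1; have : (k <= n - 1)%N.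
      have : (0 < #|[set x | k <= rho r' x]|)%N by apply/card_gt0P; exists x; rewrite inE.
      by rewrite card_rho_ge //; lia.
    lia.
  move=> e1; have : (k <= n - 1)%N.
    have : (0 < #|[set x | k <= rho r x]|)%N by apply/card_gt0P; exists x; rewrite inE.
    by rewrite card_rho_ge //; lia.
  lia.
have er : r = r'.
  apply/ffunP => t; have h : (rho r' (r t) < k)%N by rewrite -erho rho_r.
  rewrite -(rho_lt h); congr (r' _); apply: val_inj; by rewrite /= -erho rho_r.
subst r'; split => //.
suff : (s^-1 =1 s'^-1)%g.
  move=> h; apply: invg_inj; exact/permP.
move=> j; apply: (Bmx_cols ri) => x.
by apply: Z2b_inj; have := congr1 (fun A : 'M_n => A x j) e; rewrite /= !mxE.
Qed.

Local Close Scope ring_scope.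


Lemma sum_bool_le m (b : nat -> bool) : \sum_(0 <= u < m) (b u : nat) <= m.
Proof.
elim: m => [|m IH]; first by rewrite big_nil.
rewrite big_nat_recr //=; have : (b m : nat) <= 1 by case: (b m).
lia.
Qed.

Lemma sum_bool_all m (b : nat -> bool) :
  \sum_(0 <= u < m) (b u : nat) = m -> forall u, u < m -> b u.
Proof.
elim: m => [|m IH] //; rewrite big_nat_recr //= => h u hu.
have := sum_bool_le m b; case e: (b m) h => /= h le.
  rewrite ltnS leq_eqVlt in hu; case/orP: hu => [/eqP -> //|hu].
  by apply: IH => //; lia.
lia.
Qed.

Lemma sum_bool_0 m (b : nat -> bool) :
  \sum_(0 <= u < m) (b u : nat) = 0 -> forall u, u < m -> ~~ b u.
Proof.
elim: m => [|m IH] //; rewrite big_nat_recr //= => /eqP; rewrite addn_eq0.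
case/andP => /eqP h1 h2 u; rewrite ltnS leq_eqVlt => /orP [/eqP ->|hu].
  by move: h2; case: (b m).
exact: IH.
Qed.

Lemma GR m : forall M : nat -> nat -> bool,
  (forall t, t < m -> \sum_(0 <= u < m) (M t u : nat) = m - t) ->
  (forall u, u < m -> \sum_(0 <= t < m) (M t u : nat) = m - u) ->
  forall t u, t < m -> u < m -> M t u = (t + u < m).
Proof.
elim: m => [|m IH] M hr hc t u ht hu //.
have row0 := sum_bool_all (hr 0 isT).
have colm : forall t, t < m -> ~~ M t.+1 m.
  apply: sum_bool_0; have := hc m (ltnSn m).
  rewrite big_nat_recl // row0 //= subSnn; lia.
have hr' : forall t, t < m -> \sum_(0 <= u < m) (M t.+1 u : nat) = m - t.
  move=> t' ht'; have := hr t'.+1 ht'; rewrite big_nat_recr //= (negbTE (colm t' ht')).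
  by rewrite addn0 subSS.
have hc' : forall u, u < m -> \sum_(0 <= t < m) (M t.+1 u : nat) = m - u.
  move=> u' hu'; have := hc u' (ltnW hu'); rewrite big_nat_recl //.
  rewrite row0 //=; last by lia.
  lia.
case: t ht => [|t] ht; first by rewrite row0 // add0n.
case: (ltnP u m) => hum.
  by rewrite (IH (fun t u => M t.+1 u)) // addSn.
have -> : u = m by lia.
by rewrite (negbTE (colm t ht)); apply/esym/negbTE; lia.
Qed.


Lemma valZ2' (z : 'Z_2) : val z = (z != 0%R).
Proof. by case: z => [[|[|m]] h]. Qed.

Lemma Z2E (z : 'Z_2) : z = (((z != 0%R) : bool) : nat)%:R%R.
Proof. by case: z => [[|[|m]] h] //; apply: val_inj. Qed.

Lemma count_enum_map (T : finType) (f : T -> nat) v :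
  count (pred1 v) [seq f x | x <- enum T] = #|[set x | f x == v]|.
Proof.
rewrite count_map cardE /enum_mem size_filter count_filter; apply: eq_count => x.
by rewrite !inE andbT.
Qed.

Lemma cnt_eta1 n k t : k <= n -> t < k -> count (pred1 (n - t)) (eta_target n k) = 1.
Proof.
move=> hk ht; rewrite count_cat count_nseq count_map /=.
rewrite (@eq_in_count _ _ (pred1 t)); last first.
  by move=> i; rewrite mem_iota /= => hi; apply/eqP/eqP; lia.
rewrite count_uniq_mem ?iota_uniq // mem_iota /= ht.
by case: eqP => /= e; lia.
Qed.

Lemma cnt_theta1 n k u : u < k -> count (pred1 (k - u)) (theta_target n k) = 1.
Proof.
move=> hu; rewrite count_cat count_nseq count_map /=.
rewrite (@eq_in_count _ _ (pred1 u)); last first.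
  by move=> i; rewrite mem_iota /= => hi; apply/eqP/eqP; lia.
rewrite count_uniq_mem ?iota_uniq // mem_iota /= hu.
by case: eqP => /= e; lia.
Qed.

Lemma cnt_thetaK n k : count (pred1 k.+1) (theta_target n k) = n - k.
Proof.
rewrite count_cat count_nseq count_map /= eqxx mul1n.
rewrite (@eq_in_count _ _ pred0) ?count_pred0 ?addn0 //.
by move=> i; rewrite mem_iota /= => hi; apply/eqP; lia.
Qed.

Lemma mem_eta n k v : v \in eta_target n k -> (exists2 t, t < k & v = n - t) \/ v = 1.
Proof.
rewrite mem_cat => /orP [/mapP [i] | /nseqP [-> _]]; last by right.
by rewrite mem_iota => hi ->; left; exists i => //; lia.
Qed.

Lemma mem_theta n k v : v \in theta_target n k -> v = k.+1 \/ (exists2 u, u < k & v = k - u).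
Proof.
rewrite mem_cat => /orP [/nseqP [-> _] | /mapP [i]]; first by left.
by rewrite mem_iota => hi ->; right; exists i => //; lia.
Qed.

Lemma card1_uniq (T : finType) (S : {set T}) x y : #|S| = 1 -> x \in S -> y \in S -> x = y.
Proof. by move/eqP/cards1P => [z ->]; rewrite !inE => /eqP -> /eqP ->. Qed.

Lemma pick1 (T : finType) (P : pred T) d : #|[set x | P x]| = 1 -> P (odflt d [pick x | P x]).
Proof.
move/eqP/cards1P => [z e]; case: pickP => //= H.
by have := set11 z; rewrite -e inE H.
Qed.

Lemma sum_bool_cond (T : finType) (P b : pred T) :
  \sum_(x | P x) (b x : nat) = #|[set x | P x && b x]|.
Proof.
transitivity (\sum_x ((P x && b x) : nat)); last exact: sum_bool.
by rewrite big_mkcond; apply: eq_bigr => x _; case: (P x).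
Qed.

Lemma sum_ord_all k (b : 'I_k -> bool) : \sum_(t < k) (b t : nat) = k -> forall t, b t.
Proof.
rewrite sum_bool => h t.
have : [set t | b t] = setT by apply/eqP; rewrite eqEcard subsetT cardsT card_ord h leqnn.
by move/setP/(_ t); rewrite !inE.
Qed.

Lemma sum_inj_img (I T : finType) (f : I -> T) (fi : injective f) (P : pred T) (F : T -> nat) :
  (forall x, P x = (x \in codom f)) -> \sum_(x | P x) F x = \sum_(t : I) F (f t).
Proof.
move=> hP; rewrite -[RHS](big_imset _ (in2W fi)) /=; apply: eq_bigl => x.
rewrite hP; apply/codomP/imsetP => [[t ->]|[t _ ->]]; by exists t.
Qed.


Lemma Phi_surj n k (hk : (k <= n)%N) (A : 'M['Z_2]_n) : A \in Hnk n k ->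
  exists s (r : {ffun 'I_k -> 'I_n}), injective r /\ A = Phi s r.
Proof.
rewrite inE => /and3P [hu /eqP he /eqP ht].
pose a x j := A x j != 0%R.
pose R := rowsum A; pose Cs := colsum A.
have Ra x : R x = \sum_j (a x j : nat) by apply: eq_bigr => j _; rewrite valZ2'.
have Ca j : Cs j = \sum_x (a x j : nat) by apply: eq_bigr => x _; rewrite valZ2'.
have pR : perm_eq [seq R x | x <- enum 'I_n] (eta_target n k).
  by rewrite -he /eta perm_sym perm_sort perm_refl.
have pC : perm_eq [seq Cs x | x <- enum 'I_n] (theta_target n k).
  by rewrite -ht /theta perm_sym perm_sort perm_refl.
have cntR v : #|[set x | R x == v]| = count (pred1 v) (eta_target n k).
  rewrite -count_enum_map; by move/seq.permP: (pR) => /(_ (pred1 v)).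
have cntC v : #|[set x | Cs x == v]| = count (pred1 v) (theta_target n k).
  rewrite -count_enum_map; by move/seq.permP: (pC) => /(_ (pred1 v)).
have memR x : R x \in eta_target n k by rewrite -(perm_mem pR) map_f ?mem_enum.
have memC x : Cs x \in theta_target n k by rewrite -(perm_mem pC) map_f ?mem_enum.
pose r := [ffun t : 'I_k => odflt (widen_ord hk t) [pick x | R x == n - t]].
have Rr t : R (r t) = n - t.
  rewrite ffunE; apply/eqP; apply: (pick1 (P := fun x => R x == n - t)).
  by rewrite cntR cnt_eta1.
have runiq (t : 'I_k) x : R x = n - t -> x = r t.
  move=> e; apply: (@card1_uniq _ [set x | R x == n - t]); rewrite ?cntR ?cnt_eta1 //.
    by rewrite inE e.
  by rewrite inE Rr.
have ri : injective r.
  move=> t t' e; apply: ord_inj; have := Rr t; rewrite e Rr.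
  have := ltn_ord t; have := ltn_ord t'; lia.
have nd x : k <= rho r x -> R x = 1.
  move=> h; case: (mem_eta (memR x)) => // -[t ht0 e].
  have := rho_ge h (Ordinal ht0); by rewrite -(runiq (Ordinal ht0) x e) eqxx.
pose tau x := odflt x [pick j | a x j].
have tauP x : k <= rho r x -> forall j, a x j = (j == tau x).
  move=> h; have c1 : #|[set j | a x j]| = 1 by rewrite -sum_bool -Ra nd.
  have at1 : a x (tau x) by apply: (pick1 (P := fun j => a x j)).
  move=> j; apply/idP/eqP => [aj|->] //.
  by apply: (card1_uniq c1); rewrite inE.
have taui x y : k <= rho r x -> k <= rho r y -> tau x = tau y -> x = y.
  move=> hx hy e; apply/eqP; apply/negPn/negP => ne.
  move: hu; rewrite unitmxE (determinant_alternate ne) ?unitr0 // => j.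
  by rewrite [LHS]Z2E [RHS]Z2E -/(a x j) -/(a y j) tauP // tauP // e.
pose N := [set x | k <= rho r x].
pose I := [set tau x | x in N].
have cardI : #|I| = n - k.
  rewrite card_in_imset ?card_rho_ge // => x y; rewrite !inE; exact: taui.
pose D j := \sum_(t < k) (a (r t) j : nat).
have CsD j : Cs j = D j + (j \in I).
  rewrite Ca (bigID (fun x => rho r x < k)) /=; congr (_ + _).
    apply: sum_inj_img => // x; apply/idP/codomP => [h|[t ->]]; last by rewrite rho_r.
    by exists (Ordinal h); rewrite rho_lt.
  rewrite sum_bool_cond.
  case: (boolP (j \in I)) => [/imsetP [x0 hx0 ->]|jI].
    apply/eqP/cards1P; exists x0; apply/setP => x; rewrite !inE.
    rewrite inE in hx0; rewrite -leqNgt.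
    case: (leqP k (rho r x)) => hx /=; last first.
      by apply/esym/eqP => e; move: hx; rewrite e ltnNge hx0.
    rewrite tauP //; apply/eqP/eqP => [e|->] //; exact: (taui _ _ hx hx0 (esym e)).
  apply/eqP; rewrite cards_eq0; apply/eqP/setP => x; rewrite !inE -leqNgt.
  apply/negbTE; apply/andP => -[hx]; rewrite tauP // => /eqP e.
  by move: jI; rewrite e imset_f // inE.
have Dle j : D j <= k.
  by rewrite /D sum_bool; have := max_card (mem [set t | a (r t) j]); rewrite card_ord.
pose K := [set j | Cs j == k.+1].
have cardK : #|K| = n - k by rewrite cntC cnt_thetaK.
have KI : K = I.
  apply/eqP; rewrite eqEcard cardI cardK leqnn andbT.
  apply/subsetP => j; rewrite inE => /eqP; rewrite CsD => e.
  case: (boolP (j \in I)) => // jI; move: e; rewrite (negbTE jI) addn0 => e.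
  by have := Dle j; rewrite e ltnn.
have Iall j t : j \in I -> a (r t) j.
  move=> jI; have : D j = k.
    have CK : Cs j = k.+1 by move: (jI); rewrite -KI inE => /eqP.
    by have := CsD j; rewrite CK jI /=; lia.
  by move/sum_ord_all; apply.
pose c := [ffun u : 'I_k => odflt (widen_ord hk u) [pick j | Cs j == k - u]].
have Cc u : Cs (c u) = k - u.
  rewrite ffunE; apply/eqP; apply: (pick1 (P := fun j => Cs j == k - u)).
  by rewrite cntC cnt_theta1.
have cuniq (u : 'I_k) j : Cs j = k - u -> j = c u.
  move=> e; apply: (@card1_uniq _ [set j | Cs j == k - u]); rewrite ?cntC ?cnt_theta1 //.
    by rewrite inE e.
  by rewrite inE Cc.
have ci : injective c.
  move=> u u' e; apply: ord_inj; have := Cc u; rewrite e Cc.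
  have := ltn_ord u; have := ltn_ord u'; lia.
have cI u : c u \notin I.
  rewrite -KI inE Cc; apply/eqP; lia.
have cover j : j \notin I -> exists u, j = c u.
  move=> jI; case: (mem_theta (memC j)) => [e|[u hu0 e]].
    by move: jI; rewrite -KI inE e eqxx.
  by exists (Ordinal hu0); apply: cuniq.
have DC u : D (c u) = k - u by have := CsD (c u); rewrite Cc (negbTE (cI u)) addn0.
have rowM (t : 'I_k) : \sum_(u < k) (a (r t) (c u) : nat) = k - t.
  have := Rr t; rewrite Ra (bigID (fun j => j \in I)) /=.
  rewrite (eq_bigr (fun => 1)); last by move=> j jI; rewrite Iall.
  rewrite sum1_card cardI (sum_inj_img ci (P := fun j => j \notin I)); last first.
    move=> j; apply/idP/codomP => [/cover [u ->]|[u ->]]; [by exists u | exact: cI].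
  have := ltn_ord t => ht0 e; transitivity (n - t - (n - k)); last by lia.
  by rewrite -e addKn.
pose M (t u : nat) := if insub t is Some t' then
                       (if insub u is Some u' then a (r t') (c u') else false) else false.
have ME (t u : 'I_k) : M t u = a (r t) (c u) by rewrite /M !valK.
have GRk (t u : 'I_k) : a (r t) (c u) = (t + u < k).
  rewrite -ME; apply: GR => //.
    move=> t0 h0; rewrite big_mkord -(rowM (Ordinal h0)).
    by apply: eq_bigr => u0 _; rewrite (ME (Ordinal h0)).
  move=> u0 h0; rewrite big_mkord -(DC (Ordinal h0)).
  by apply: eq_bigr => t0 _; rewrite (ME t0 (Ordinal h0)).
pose sg x := oapp c (tau x) (insub (rho r x) : option 'I_k).
have sgr t : sg (r t) = c t by rewrite /sg rho_r // valK.
have sgn x : k <= rho r x -> sg x = tau x.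
  by move=> h; rewrite /sg insubN // -leqNgt.
have tauI x : k <= rho r x -> tau x \in I by move=> h; rewrite imset_f // inE.
have sgi : injective sg.
  move=> x y; case: (ltnP (rho r x) k) => hx; case: (ltnP (rho r y) k) => hy.
  - rewrite -(rho_lt hx) -(rho_lt hy) !sgr => /ci ->; by [].
  - by rewrite -(rho_lt hx) sgr sgn // => e; have := cI (Ordinal hx); rewrite e tauI.
  - by rewrite -(rho_lt hy) sgr sgn // => e; have := cI (Ordinal hy); rewrite -e tauI.
  - by rewrite !sgn //; apply: taui.
pose s := perm sgi.
exists s, r; split => //.
apply/matrixP => x j; rewrite mxE.
set y := (s^-1)%g j.
have -> : j = sg y by rewrite -permE /y permKV.
rewrite [LHS]Z2E -/(a x (sg y)); congr (nat_of_bool _)%:R%R.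
rewrite /Bm; case: (ltnP (rho r x) k) => hx.
  rewrite -(rho_lt hx); case: (ltnP (rho r y) k) => hy /=.
    by rewrite -{1}(rho_lt hy) sgr GRk /= rho_r.
  by rewrite sgn // Iall ?tauI.
by rewrite tauP // -(sgn x hx) (inj_eq sgi) eq_sym.
Qed.



Lemma conj_fixE n (g s : 'S_n) : ((s ^ g)%g == s) = (s \in ('C[g])%g).
Proof. by rewrite cent1E conjgC eq_sym (inj_eq (mulgI g)). Qed.

Lemma fix_count (n k : nat) (hk : (k <= n)%N) (g : 'S_n) :
  #|[set A in Hnk n k | pconj g A == A]| = (#|('C[g])%g| * #|[set x | g x == x]| ^_ k)%N.
Proof.
pose PhiP := fun p : 'S_n * {ffun 'I_k -> 'I_n} => Phi p.1 p.2.
pose F := [set x | g x == x].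
pose Q := setX ('C[g])%g [set f : {ffun 'I_k -> 'I_n} in ffun_on (mem F) | injectiveb f].
have QE p : p \in Q = [&& injectiveb p.2, (p.1 ^ g)%g == p.1 & [ffun t => g (p.2 t)] == p.2].
  case: p => s r; rewrite in_setX -conj_fixE in_set /=.
  have -> : (r \in ffun_on (mem F)) = ([ffun t => g (r t)] == r).
    apply/idP/eqP => [/ffun_onP h|h].
      by apply/ffunP => t; rewrite ffunE; have := h t; rewrite inE => /eqP.
    by apply/ffun_onP => t; rewrite inE -{2}h ffunE.
  by case: (_ == s); case: (injectiveb r); case: (_ == r).
have -> : [set A in Hnk n k | pconj g A == A] = PhiP @: Q.
  apply/setP => A; rewrite inE; apply/andP/imsetP => [[hA fA]|[[s r] hp ->]].
    have [s [r [ri eA]]] := Phi_surj hk hA; rewrite eA in fA *.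
    exists (s, r) => //; rewrite QE /= (introT (injectiveP _) ri) /=.
    move: fA; rewrite Phi_act => /eqP /Phi_inj [] //.
      by move=> a b; rewrite !ffunE => /perm_inj /ri.
    by move=> -> ->; rewrite !eqxx.
  move: hp; rewrite QE /= => /and3P [/injectiveP ri /eqP e1 /eqP e2].
  by rewrite /PhiP /= Phi_Hnk // Phi_act e1 e2 eqxx.
rewrite card_in_imset; last first.
  move=> [s r] [s' r']; rewrite !QE /= => /and3P [/injectiveP ri _ _] /and3P [/injectiveP ri' _ _].
  by rewrite /PhiP /= => /Phi_inj [] // -> ->.
by rewrite cardsX card_inj_ffuns_on card_ord.
Qed.

Local Open Scope ring_scope.


Lemma phiE (n k : nat) (hk : (k <= n)%N) (g : 'S_n) :
  cfRepr (betaH n k) g = (#|('C[g])%g| * #|[set x | g x == x]| ^_ k)%:R.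
Proof.
rewrite cfunE inE mulr1n /mxtrace -fix_count //.
rewrite (eq_bigr (fun i => ((pconj g (enum_val i) == enum_val i)%:R : algC))); last first.
  by move=> j _; rewrite /= mxE.
rewrite -(big_enum_val (fun A => ((pconj g A == A)%:R : algC))) /=.
rewrite -natr_sum -sum1dep_card; congr (_%:R).
rewrite (big_mkcond (fun A => _ \in _)) [RHS]big_mkcond /=; apply: eq_bigr => A _.
by case: (A \in Hnk n k); case: (_ == _).
Qed.

Lemma card_fix_supp (n : nat) (C : {set 'S_n}) :
  #|[set x | repr C x == x]| = (n - supp_size C)%N.
Proof.
rewrite /supp_size.
have h := cardsC [set x | repr C x != x]; rewrite card_ord in h.
have e : #|[set x | repr C x == x]| = #|~: [set x | repr C x != x]|.
  by apply: eq_card => x; rewrite !inE negbK.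
rewrite e; apply/eqP; rewrite -(eqn_add2r #|[set x | repr C x != x]|) subnK.
  by rewrite addnC h.
by have := max_card (mem [set x | repr C x != x]); rewrite card_ord.
Qed.

Theorem mainTheorem6 (n k : nat) (hk : (k <= n)%N) (i : Iirr [set: 'S_n]) :
  '[cfRepr (betaH n k), 'chi_i] =
  \sum_(C in classes [set: 'S_n]) 'chi_i (repr C) * ((n - supp_size C) ^_ k)%:R.
Proof.
rewrite cfdotC_char ?cfRepr_char ?irr_char // cfdotE.
rewrite (eq_bigr (fun g => 'chi_i g * cfRepr (betaH n k) g)); last first.
  by move=> g _; rewrite phiE // conjC_nat.
rewrite sum_by_classes; last first.
  by move=> g h _ Gh; rewrite !cfunJ.
rewrite mulr_sumr; apply: eq_bigr => C /imsetP [x _ ->].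
rewrite phiE // card_fix_supp natrM.
set y := repr _.
have hC : (#|(x ^: [set: 'S_n])%g| * #|('C[y])%g|)%N = #|[set: 'S_n]|.
  rewrite /y; have [z _ ->] := repr_class [set: 'S_n] x.
  rewrite cent1J cardJg -index_cent1 mulnC.
  have e : #|('C[x])%g| = #|('C_[set: 'S_n][x])%g| by rewrite setTI.
  by rewrite e Lagrange ?subsetIl.
set a := #|(x ^: _)%g|%:R; set b := #|('C[y])%g|%:R.
have -> : forall (G c m : algC), G^-1 * (a * (c * (b * m))) = (G^-1 * (a * b)) * (c * m).
  by move=> *; ring.
by rewrite /a /b -natrM hC mulVf ?mul1r // pnatr_eq0 -lt0n cardG_gt0.
Qed.
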